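(* Let $r$ be a positive integer. There is a constant $c=c(r)$ such that every connected $S_{1,1,1,r}$-subgraph-free graph that is not subcubic has treedepth at most $c$.
   Context: For positive integers $w,x,y,z$, $S_{w,x,y,z}$ is the tree obtained from the star $K_{1,4}$ by subdividing its four edges $w-1$, $x-1$, $y-1$ and $z-1$ times respectively (so it consists of four paths of lengths $w,x,y,z$ sharing a common endvertex, the centre). A graph $G$ is $H$-subgraph-free if $H$ is not isomorphic to any subgraph of $G$ (subgraph obtained by vertex and edge deletions). A graph is subcubic if every vertex has degree at most $3$. The treedepth of $G$ is the minimum height of a rooted forest $F$ on vertex set $V(G)$ such that for every edge $uv$ of $G$, one of $u,v$ is an ancestor of the other in $F$. *)

(* Defs.v *)
From mathcomp Require Import all_boot.
Set Implicit Arguments. Unset Strict Implicit. Unset Printing Implicit Defensive.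

Definition simple_graph (T : finType) (e : rel T) : Prop :=
  symmetric e /\ irreflexive e.

Definition connected_graph (T : finType) (e : rel T) : Prop :=
  forall x y : T, connect e x y.

Definition subcubic (T : finType) (e : rel T) : Prop :=
  forall v : T, #|[set u | e v u]| <= 3.

Definition contains_subgraph (n : nat) (h : rel 'I_n) (T : finType) (e : rel T) : Prop :=
  exists f : 'I_n -> T, injective f /\ forall a b : 'I_n, h a b -> e (f a) (f b).

(* The spider S_{w,x,y,z}: vertex set {0,...,w+x+y+z}, centre 0; the leg of
   length l with offset o consists of vertices o+1, ..., o+l, in this order
   along the path, with o+1 adjacent to the centre. *)
Definition leg_adj (o l a b : nat) : bool :=
  ((o < a) && (b == a.+1) && (b <= o + l)) || ((a == 0) && (b == o.+1) && (0 < l)).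

Definition spider_adj (w x y z a b : nat) : bool :=
  [|| leg_adj 0 w a b, leg_adj w x a b, leg_adj (w + x) y a b | leg_adj (w + x + y) z a b].

Definition spider (w x y z : nat) : rel 'I_(1 + w + x + y + z) :=
  fun a b => spider_adj w x y z a b || spider_adj w x y z b a.
Arguments spider : clear implicits.

(* Rooted forests on T given by a parent map (None = root).
   pit p k v = the k-th ancestor of v (pit p 0 v = Some v). *)
Fixpoint pit (T : Type) (p : T -> option T) (k : nat) (v : T) : option T :=
  match k with
  | 0 => Some v
  | k'.+1 => obind p (pit p k' v)
  end.

Definition ancestor (T : Type) (p : T -> option T) (u v : T) : Prop :=
  exists k, pit p k v = Some u.

(* height of the forest is at most c: every root-to-vertex path has at most c
   vertices (this also forces the parent map to be acyclic, i.e. a forest) *)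
Definition forest_height_le (T : Type) (p : T -> option T) (c : nat) : Prop :=
  forall v, pit p c v = None.

Definition treedepth_le (T : finType) (e : rel T) (c : nat) : Prop :=
  exists p : T -> option T, forest_height_le p c /\
    forall u v : T, e u v -> ancestor p u v \/ ancestor p v u.

(* Main.v *)
Require Import Defs.
From mathcomp Require Import all_boot zify.
From Stdlib Require Import Classical.
Set Implicit Arguments. Unset Strict Implicit.


Lemma spider_emb (T : finType) (e : rel T) (r : nat) v a b c (l : seq T) :
  symmetric e -> irreflexive e -> path e v l -> uniq (v :: l) -> size l = r ->
  e v a -> e v b -> e v c -> a != b -> a != c -> b != c ->
  a \notin l -> b \notin l -> c \notin l -> contains_subgraph (spider 1 1 1 r) e.
Proof.
move=> esym eirr pl ul sl ea eb ec ab ac bc al bl cl.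
pose F (k : nat) := match k with 0 => v | 1 => a | 2 => b | 3 => c | k.+4 => nth v l k end.
have pe : forall k, k < size l -> e (nth v (v :: l) k) (nth v l k) by apply/pathP.
have hadj : forall i j, spider_adj 1 1 1 r i j -> e (F i) (F j).
  move=> i j; rewrite /spider_adj /leg_adj /=.
  case: i => [|[|[|[|i]]]]; case: j => [|[|[|[|j]]]] //=; rewrite ?ltnS ?eqSS ?addn0 ?andbF ?andbT ?orbF //=.
  - by move=> /andP[/eqP -> h]; move: (pe 0); rewrite sl => /(_ h).
  - move=> /andP[/eqP -> h]; move: (pe i.+1); rewrite sl /=; apply.
    exact: h.
have vnl : v \notin l by move: ul => /andP[].
have ul' : uniq l by move: ul => /andP[].
have av : a != v by apply/eqP => hh; move: ea; rewrite hh eirr.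
have bv : b != v by apply/eqP => hh; move: eb; rewrite hh eirr.
have cv : c != v by apply/eqP => hh; move: ec; rewrite hh eirr.
have Fin : forall k, k < size l -> nth v l k \in l by move=> k; apply: mem_nth.
have Finj : forall i j, i < 4 + r -> j < 4 + r -> F i = F j -> i = j.
  move=> i j; rewrite -sl.
  case: i => [|[|[|[|i]]]]; case: j => [|[|[|[|j]]]] //= hi hj;
  rewrite ?add4n ?ltnS in hi hj;
  try (move=> h; subst; by rewrite ?eqxx in av bv cv ab ac bc);
  try (move=> h; have := Fin _ hj; rewrite -h => h'; by rewrite h' in vnl al bl cl);
  try (move=> h; have := Fin _ hi; rewrite h => h'; by rewrite h' in vnl al bl cl).
  by move=> /eqP; rewrite nth_uniq // => /eqP ->.
exists (fun k : 'I_(1 + 1 + 1 + 1 + r) => F k); split.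
  by move=> i j h; apply: val_inj; exact: (Finj _ _ (ltn_ord i) (ltn_ord j) h).
move=> i j; rewrite /spider => /orP[] h; first exact: hadj.
by rewrite esym; apply: hadj.
Qed.


Lemma success (T : finType) (e : rel T) (r : nat) v (l : seq T) :
  symmetric e -> irreflexive e -> path e v l -> uniq (v :: l) -> size l = r ->
  3 <= #|[set y | e v y & y \notin l]| -> contains_subgraph (spider 1 1 1 r) e.
Proof.
move=> esym eirr pl ul sl hc.
set A := [set y | e v y & y \notin l] in hc.
have sz : 3 <= size (enum A) by rewrite -cardE.
have inA : forall i, i < 3 -> e v (nth v (enum A) i) && (nth v (enum A) i \notin l).
  move=> i hi; have : nth v (enum A) i \in A by rewrite -mem_enum mem_nth // (leq_trans hi).
  by rewrite inE.
have neq : forall i j, i < 3 -> j < 3 -> i != j -> nth v (enum A) i != nth v (enum A) j.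
  move=> i j hi hj; rewrite nth_uniq ?enum_uniq //; by apply: leq_trans sz.
have /andP[e0 n0] := inA 0 isT.
have /andP[e1 n1] := inA 1 isT.
have /andP[e2 n2] := inA 2 isT.
exact: (spider_emb esym eirr pl ul sl e0 e1 e2 (neq 0 1 isT isT isT) (neq 0 2 isT isT isT) (neq 1 2 isT isT isT) n0 n1 n2).
Qed.


Lemma longleg (T : finType) (e : rel T) (r : nat) v :
  symmetric e -> irreflexive e -> 0 < r -> 4 <= #|[set y | e v y]| ->
  forall n t, size t <= n -> path e v t -> uniq (v :: t) ->
  r * (4 - minn #|[set y | e v y & y \notin t]| 3) <= size t ->
  contains_subgraph (spider 1 1 1 r) e.
Proof.
move=> esym eirr r0 deg; elim=> [|n IH] t.
  by rewrite leqn0 => /eqP ->; nia.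
move=> st pt ut hs.
case: t st pt ut hs => [|t1 t'] st pt ut hs; first by move: hs => /=; nia.
have srt : r <= size (t1 :: t') by nia.
set a := #|[set y | e v y & y \notin (t1 :: t')]| in hs.
have pl : path e v (take r (t1 :: t')) by apply: take_path.
have ul : uniq (v :: take r (t1 :: t')).
  move: ut => /= /andP[vt ut]; rewrite take_uniq // andbT.
  by apply: contra vt; apply: mem_take.
have sl : size (take r (t1 :: t')) = r by rewrite size_takel.
case: (leqP 3 #|[set y | e v y & y \notin take r (t1 :: t')]|) => hc.
  exact: success esym eirr pl ul sl hc.
move: pt => /= /andP[et1 pt'].
move: ut => /= /andP[vt /andP[t1t' ut']].
set j := find (e v) t'.
have ha : a < 3.
  rewrite ltnNge; apply/negP => h3; move: hc; rewrite ltnNge => /negP; apply.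
  apply: leq_trans h3 _; apply: subset_leq_card; apply/subsetP => y.
  rewrite !inE => /andP[-> hy] /=; apply: contra hy; apply: mem_take.
have hj : j.+1 < r.
  rewrite ltnNge; apply/negP => hjr; move: hc; rewrite ltnNge => /negP; apply.
  have : #|[set y | e v y] :\ t1| <= #|[set y | e v y & y \notin take r (t1 :: t')]|.
    apply: subset_leq_card; apply/subsetP => y; rewrite !inE => /andP[yt1 eyv].
    rewrite eyv /=; move: yt1; rewrite -(prednK r0) /= => yt1; set r' := r.-1.
    rewrite inE negb_or yt1 /=; apply/negP => hy.
    have hi := hy; rewrite -index_mem in hi.
    have := nth_index t1 hy; rewrite nth_take; last by rewrite (leq_trans hi) // size_take; case: ifP => //; rewrite ltnNge => /negbFE.
    move=> hnth.
    have hlt : index y (take r' t') < j.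
      apply: (leq_trans hi); rewrite size_take; case: ifP => [_|/negbT]; rewrite /r' -?ltnNge; lia.
    by have := before_find t1 hlt; rewrite hnth eyv.
  have := cardsD1 t1 [set y | e v y]; rewrite inE et1 /=; lia.
have sz : j < size t'.
  have : r * 2 <= (size (t1 :: t')) by nia.
  rewrite /=; nia.
have hv : has (e v) t' by rewrite has_find.
have dn := drop_nth t1 sz.
set w := nth t1 t' j in dn.
have ew : e v w by apply: nth_find.
have pt'' : path e v (drop j t').
  rewrite dn /= ew /=.
  move: pt'; rewrite -{1}(cat_take_drop j t') cat_path => /andP[_].
  by rewrite dn /= => /andP[].
have ut'' : uniq (v :: drop j t').
  rewrite /= drop_uniq // andbT; apply: contra vt => h.
  by rewrite inE (mem_drop h) orbT.
have hcard : a.+1 <= #|[set y | e v y & y \notin drop j t']|.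
  have : t1 |: [set y | e v y & y \notin t1 :: t'] \subset [set y | e v y & y \notin drop j t'].
    apply/subsetP => y; rewrite !inE => /orP[/eqP ->|/andP[-> h]].
      by rewrite et1 /=; apply: contra t1t'; apply: mem_drop.
    by apply: contra h => hy; rewrite (mem_drop hy) orbT.
  move=> /subset_leq_card; rewrite cardsU1 inE inE eqxx /=.
  by rewrite andbF.
apply: (IH (drop j t')) => //.
  rewrite size_drop; move: st => /=; lia.
rewrite size_drop.
have h1 : r * (4 - minn #|[set y | e v y & y \notin drop j t']| 3) <= r * (3 - a).
  rewrite leq_mul2l; apply/orP; right; lia.
have e4 : minn a 3 = a by lia.
rewrite e4 in hs.
have : r * (4 - a) = r * (3 - a) + r by rewrite -mulnSr; congr (_ * _); lia.
move: hs h1 hj => /=; lia.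
Qed.


Lemma half (T : finType) (e : rel T) : symmetric e ->
  forall P w, sorted e P -> uniq P -> w \in P ->
  exists t, [/\ path e w t, uniq (w :: t), {subset w :: t <= P} & size P <= 2 * size (w :: t)].
Proof.
move=> esym P w sP uP wP.
set i := index w P.
have hi : i < size P by rewrite index_mem.
have nw : nth w P i = w by rewrite nth_index.
case: (leqP (size P) (2 * (size P - i))) => hc.
  have dn := drop_nth w hi; rewrite nw in dn.
  exists (drop i.+1 P); split.
  - by have := drop_sorted i sP; rewrite dn.
  - by rewrite -dn drop_uniq.
  - by move=> y; rewrite -dn => /mem_drop.
  - by rewrite -dn size_drop.
have tn := take_nth w hi; rewrite nw in tn.
exists (rev (take i P)); split.
- have := take_sorted i.+1 sP; rewrite tn -rev_sorted rev_rcons /=.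
  rewrite (@eq_path _ _ e) //; by move=> a b; rewrite /= esym.
- by rewrite -rev_rcons rev_uniq -tn take_uniq.
- by move=> y; rewrite -rev_rcons mem_rev -tn => /mem_take.
- rewrite /= size_rev size_take hi; lia.
Qed.

Lemma take_find_notin (T : eqType) (a : pred T) (s : seq T) y :
  y \in take (find a s) s -> ~~ a y.
Proof.
move=> hy; have hi := hy; rewrite -index_mem in hi.
have := nth_index y hy; rewrite nth_take; last first.
  by rewrite (leq_trans hi) // size_take; case: ifP => // /negbT; rewrite -leqNgt.
move=> hn; have hlt : index y (take (find a s) s) < find a s.
  apply: (leq_trans hi); rewrite size_take; case: ifP => // /negbT; rewrite -leqNgt.
  done.
by rewrite -hn (before_find y hlt).
Qed.

Lemma from_v (T : finType) (e : rel T) v P : symmetric e -> connected_graph e ->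
  sorted e P -> uniq P -> 0 < size P ->
  exists t, [/\ path e v t, uniq (v :: t) & size P <= 2 * size t + 2].
Proof.
move=> esym conn sP uP nP.
case vP: (v \in P).
  have [t [pt ut _ st]] := half esym sP uP vP.
  by exists t; split => //; move: st => /=; lia.
case: P sP uP nP vP => [//|x0 P'] sP uP _ vP.
have := conn v x0 => /connectP [s0 ps0 hx0].
have hl0 : last v s0 \in x0 :: P' by rewrite -hx0 mem_head.
move: hl0; case: (shortenP ps0) => s ps us _ hl0.
set k := find (mem (x0 :: P')) s.
have hs : has (mem (x0 :: P')) s.
  apply/hasP; exists (last v s) => //.
  have := mem_last v s; rewrite inE => /orP[/eqP h|//].
  by rewrite h vP in hl0.
have hk : k < size s by rewrite -has_find.
set w := nth v s k.
have wP : w \in x0 :: P' by have := nth_find v hs.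
have [t [pt ut sub st]] := half esym sP uP wP.
have dn := drop_nth v hk.
exists (take k s ++ w :: t); split.
- rewrite cat_path take_path //=; rewrite pt andbT.
  move: ps; rewrite -{1}(cat_take_drop k s) cat_path => /andP[_].
  by rewrite dn /= => /andP[].
- move: us => /= /andP[vs us].
  rewrite /= mem_cat negb_or -andbA; apply/and3P; split.
  + by apply: contra vs => /mem_take.
  + by apply/negP => /sub; rewrite vP.
  + rewrite cat_uniq take_uniq // ut /= andbT.
    apply/negP => /orP[ws|/hasP[y yt ys]].
      by have := take_find_notin ws; rewrite /= wP.
    have := take_find_notin ys; rewrite /= (sub y) //.
    by rewrite inE yt orbT.
- rewrite size_cat; move: st => /=; lia.
Qed.


Definition eS (T : finType) (e : rel T) (S : {set T}) : rel T :=
  fun a b => [&& e a b, a \in S & b \in S].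

Definition oadj (T : finType) (e : rel T) (z : option T) (w : T) : bool :=
  if z is Some z0 then e z0 w else true.

Lemma pitS (T : Type) (p : T -> option T) k v :
  pit p k.+1 v = obind (pit p k) (p v).
Proof.
elim: k v => [|k IH] v; first by rewrite /=; case: (p v).
have -> : pit p k.+2 v = obind p (pit p k.+1 v) by [].
rewrite IH; by case: (p v).
Qed.

Lemma pit_ext (T : Type) (p q : T -> option T) :
  (forall w u, q w = Some u -> p w = Some u) ->
  forall k v u, pit q k v = Some u -> pit p k v = Some u.
Proof.
move=> h; elim=> [//|k IH] v u /=.
case hq: (pit q k v) => [w|//] /= qw.
by rewrite (IH _ _ hq) /=; apply: h.
Qed.

Lemma pit_in (T : finType) (p : T -> option T) (S : {set T}) :
  (forall v u, p v = Some u -> u \in S) ->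
  forall k v u, v \in S -> pit p k v = Some u -> u \in S.
Proof.
move=> h; elim=> [|k IH] v u vS /=; first by case=> <-.
case hq: (pit p k v) => [w|//] /= pw; exact: h pw.
Qed.

Lemma root_reach (T : Type) (p : T -> option T) (d : T -> nat) :
  (forall v u, p v = Some u -> d u < d v) ->
  forall v, exists k ρ, pit p k v = Some ρ /\ p ρ = None.
Proof.
move=> hd v; move: {2}(d v) (leqnn (d v)) => n; elim: n v => [|n IH] v hv.
  case pv: (p v) => [u|]; last by exists 0, v.
  by have := hd _ _ pv; rewrite ltnNge (leq_trans hv).
case pv: (p v) => [u|]; last by exists 0, v.
have [k [ρ [h1 h2]]] := IH u (leq_trans (hd _ _ pv) hv).
by exists k.+1, ρ; rewrite pitS pv.
Qed.

Lemma chain (T : finType) (e : rel T) (p : T -> option T) (d : T -> nat) :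
  (forall v u, p v = Some u -> e v u) -> (forall v u, p v = Some u -> d u < d v) ->
  forall k v u, pit p k v = Some u ->
  exists s, [/\ path e v s, uniq (v :: s), size s = k, last v s = u &
                forall y, y \in v :: s -> d u <= d y].
Proof.
move=> he hd; elim=> [|k IH] v u /=.
  by case=> <-; exists [::]; split => // y; rewrite inE => /eqP ->.
case hq: (pit p k v) => [w|//] /= pw.
have [s [ps us ss ls ds]] := IH _ _ hq.
have duw := hd _ _ pw.
exists (rcons s u); split.
- by rewrite rcons_path ps ls he.
- rewrite -/(uniq (v :: rcons s u)) -rcons_cons rcons_uniq us andbT; apply/negP => /ds.
  by rewrite leqNgt duw.
- by rewrite size_rcons ss.
- by rewrite last_rcons.
- move=> y; rewrite -rcons_cons mem_rcons inE => /orP[/eqP -> //|/ds].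
  by move=> h; apply: ltnW (leq_trans duw h).
Qed.

Lemma path_in (T : finType) (e : rel T) (S : {set T}) x s y :
  path (eS e S) x s -> y \in s -> y \in S /\ connect (eS e S) x y.
Proof.
elim: s x => [//|z s IH] x /= /andP[hxz ps]; rewrite inE => /orP[/eqP ->|ys].
  by split; [move: hxz => /and3P[] | apply: connect1].
have [yS cy] := IH _ ps ys; split => //.
by apply: connect_trans (connect1 hxz) cy.
Qed.

Lemma path_restrict (T : finType) (e : rel T) (S S' : {set T}) x s :
  path (eS e S) x s -> all (mem S') (x :: s) -> path (eS e S') x s.
Proof.
elim: s x => [//|z s IH] x /= /andP[hxz ps] /and3P[xS zS as'].
rewrite (IH z ps) ?andbT; last by rewrite /= zS.
rewrite /eS xS zS !andbT.
by move: hxz => /and3P[].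
Qed.

Lemma connect_restrict (T : finType) (e : rel T) (S S' B : {set T}) a b :
  connect (eS e S) a b -> a \in B ->
  (forall y y', y \in B -> y \in S -> y' \in S -> e y y' -> y' \in B) ->
  (forall y, y \in S -> y \in B -> y \in S') ->
  connect (eS e S') a b.
Proof.
move=> /connectP [s ps ->] aB hB hS'.
elim: s a ps aB => [|y s IH] a /=; first by move=> _ _; apply: connect0.
move=> /andP[/and3P[eay aS yS] ps] aB.
have yB : y \in B by apply: hB eay.
apply: connect_trans (IH _ ps yB).
by apply: connect1; rewrite /eS eay !hS'.
Qed.


Definition good (T : finType) (e : rel T) (S : {set T}) (z : option T) (p : T -> option T) : Prop :=
 [/\ (forall v, v \notin S -> p v = None),
     (forall v u, p v = Some u -> e v u /\ u \in S),
     (exists d : T -> nat, forall v u, p v = Some u -> d u < d v),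
     (forall a b, a \in S -> b \in S -> e a b -> ancestor p a b \/ ancestor p b a) &
     (forall v, v \in S -> p v = None -> oadj e z v)].

Lemma forest (T : finType) (e : rel T) : symmetric e ->
  forall n (S : {set T}) z, #|S| <= n ->
  (forall w, w \in S -> exists w', [/\ w' \in S, oadj e z w' & connect (eS e S) w' w]) ->
  exists p, good e S z p.
Proof.
move=> esym; elim=> [|n IH] S z hS hyp.
  case: (set_0Vmem S) => [-> | [w0 w0S]].
    exists (fun _ => None); split => //; [by exists (fun _ => 0) | by move=> a b; rewrite inE | by move=> v; rewrite inE].
  have h0 : 0 < #|S| by apply/card_gt0P; exists w0.
  by move: hS; rewrite leqn0 => /eqP hS0; rewrite hS0 in h0.
case: (set_0Vmem S) => [-> | [w0 w0S]].
  exists (fun _ => None); split => //; [by exists (fun _ => 0) | by move=> a b; rewrite inE | by move=> v; rewrite inE].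
have [x [xS zx _]] := hyp w0 w0S.
set C := [set y in S | connect (eS e S) x y].
set C' := C :\ x.
set R := S :\: C.
have xC : x \in C by rewrite inE xS connect0.
have inC : forall y, (y \in C) = (y \in S) && connect (eS e S) x y by move=> y; rewrite inE.
have inC' : forall y, (y \in C') = (y != x) && (y \in C) by move=> y; rewrite in_setD1.
have inR : forall y, (y \in R) = (y \notin C) && (y \in S) by move=> y; rewrite in_setD.
have cross : forall a b, a \in C -> b \in S -> e a b -> b \in C.
  move=> a b; rewrite !inC => /andP[aS xa] bS eab; rewrite bS /=.
  by apply: connect_trans xa (connect1 _); rewrite /eS eab aS bS.
have hSx : #|S :\ x| <= n by move: hS; rewrite (cardsD1 x S) xS.
have [pC [gC1 gC2 [dC gC3] gC4 gC5]] : exists p, good e C' (Some x) p.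
  apply: (IH _ _ (leq_trans _ hSx)).
    apply: subset_leq_card; apply/subsetP => y; rewrite inC' inC !inE.
    by case/andP=> -> /andP[-> _].
  move=> w; rewrite inC' inC => /andP[wx /andP[wS xw]].
  move: xw => /connectP [s0 ps0 hw].
  move: wx; rewrite hw; case: (shortenP ps0) => s ps us _.
  case: s ps us => [|w' s] ps us; first by rewrite eqxx.
  move=> _; move: ps => /= /andP[hxw' ps].
  move: us => /= /andP[]; rewrite inE negb_or => /andP[xw' xs] /andP[w's us].
  have hin : forall y, y \in w' :: s -> y \in C'.
    move=> y hy; have hp : path (eS e S) x (w' :: s) by rewrite /= hxw'.
    have [yS cy] := path_in hp hy.
    rewrite inC' inC yS cy !andbT.
    apply/eqP => yx; move: hy; rewrite yx inE (negbTE xs) orbF => /eqP hx; by rewrite hx eqxx in xw'.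
  exists w'; split.
  - by apply: hin; rewrite mem_head.
  - by move: hxw' => /and3P[].
  - apply/connectP; exists s => //.
    apply: (path_restrict (S := S) (S' := C') ps); apply/allP => y hy; exact: hin.
have [pR [gR1 gR2 [dR gR3] gR4 gR5]] : exists p, good e R z p.
  apply: (IH _ _ (leq_trans _ hSx)).
    apply: subset_leq_card; apply/subsetP => y; rewrite inR in_setD1.
    case/andP=> yC ->; rewrite andbT; apply: contraNneq yC => ->; exact: xC.
  move=> w; rewrite inR => /andP[wC wS].
  have [w' [w'S zw' cw']] := hyp w wS.
  have w'C : w' \notin C.
    apply: contra wC; rewrite !inC wS => /andP[_ xw']; exact: connect_trans xw' cw'.
  exists w'; split => //; first by rewrite inR w'C.
  apply: (connect_restrict cw' (B := R)); first by rewrite inR w'C.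
    move=> y y'; rewrite !inR => /andP[yC _] yS y'S eyy'; rewrite y'S andbT.
    apply: contra yC => y'C; apply: cross y'C yS _; by rewrite esym.
  by [].
have C'S : forall y, y \in C' -> y \in S by move=> y; rewrite inC' inC => /andP[_ /andP[]].
have RS : forall y, y \in R -> y \in S by move=> y; rewrite inR => /andP[].
have C'R : forall y, y \in R -> y \notin C'.
  by move=> y; rewrite inR inC' => /andP[yC _]; rewrite (negbTE yC) andbF.
have xC' : x \notin C' by rewrite inC' eqxx.
have xR : x \notin R by rewrite inR xC.
pose p := fun v => if v \in C' then (if pC v is Some u then Some u else Some x) else pR v.
have extC : forall w u, pC w = Some u -> p w = Some u.
  move=> w u h; rewrite /p; case: ifP => [_|/negbT wC']; first by rewrite h.
  by rewrite gC1 in h.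
have extR : forall w u, pR w = Some u -> p w = Some u.
  move=> w u h; rewrite /p; case: ifP => [wC'|_] //.
  case wR: (w \in R); first by rewrite (negbTE (C'R _ wR)) in wC'.
  by rewrite gR1 ?wR in h.
have ancx : forall b, b \in C' -> ancestor p x b.
  move=> b bC'; have [k [ρ [h1 h2]]] := root_reach gC3 b.
  have hC'in : forall v u, pC v = Some u -> u \in C' by move=> v u h; exact: (gC2 _ _ h).2.
  have ρC' := pit_in hC'in bC' h1.
  exists k.+1; rewrite /= (pit_ext extC h1) /= /p ρC' h2 //.
exists p; split.
- move=> v vS; rewrite /p; case: ifP => [vC'|_]; first by rewrite (C'S _ vC') in vS.
  by apply: gR1; apply: contra vS; apply: RS.
- move=> v u; rewrite /p; case: ifP => vC'.
    case h: (pC v) => [u'|] [<-].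
      by have [? ?] := gC2 _ _ h; split => //; apply: C'S.
    by split => //; have := gC5 _ vC' h; rewrite /= esym.
  by move=> h; have [? ?] := gR2 _ _ h; split => //; apply: RS.
- exists (fun v => if v \in C' then (dC v).+1 else if v \in R then dR v else 0).
  move=> v u; rewrite /p; case: ifP => vC'.
    case h: (pC v) => [u'|] [<-]; last by rewrite (negbTE xC') (negbTE xR).
    by have [_ uC'] := gC2 _ _ h; rewrite uC' ltnS; apply: gC3.
  move=> h; have [_ uR] := gR2 _ _ h.
  have vR : v \in R by apply/negPn/negP => vR; rewrite gR1 in h.
  by rewrite (negbTE (C'R _ uR)) uR vR; apply: gR3.
- move=> a b aS bS eab.
  have hSCR : forall y, y \in S -> (y \in C) || (y \in R).
    by move=> y yS; rewrite inR yS andbT; case: (y \in C).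
  have ancrefl : forall y, ancestor p y y by move=> y; exists 0.
  have aC'x : forall y, y \in C -> y = x \/ y \in C'.
    move=> y yC; case: (eqVneq y x) => [->|yx]; [by left | by right; rewrite inC' yx].
  case/orP: (hSCR a aS) => [aC|aR].
    have bC := cross _ _ aC bS eab.
    case: (aC'x _ aC) => [->|aC']; case: (aC'x _ bC) => [->|bC'].
    + by left.
    + by left; apply: ancx.
    + by right; apply: ancx.
    + case: (gC4 a b aC' bC' eab) => [[k hk]|[k hk]].
        by left; exists k; apply: pit_ext extC _ _ _ hk.
      by right; exists k; apply: pit_ext extC _ _ _ hk.
  have bR : b \in R.
    case/orP: (hSCR b bS) => // bC.
    have : a \in C by apply: cross bC aS _; rewrite esym.
    by rewrite inR in aR; case/andP: aR => /negbTE ->.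
  case: (gR4 a b aR bR eab) => [[k hk]|[k hk]].
    by left; exists k; apply: pit_ext extR _ _ _ hk.
  by right; exists k; apply: pit_ext extR _ _ _ hk.
- move=> v vS; rewrite /p; case: ifP => vC'; first by case: (pC v).
  move=> h; case vR: (v \in R); first exact: gR5.
  have : v \in C by move: vR; rewrite inR vS andbT => /negbFE.
  rewrite -[v \in C]/(v \in C) => vC.
  case: (eqVneq v x) => [-> //|vx].
  by rewrite inC' vx vC in vC'.
Qed.

Unset Implicit Arguments.

Theorem theorem11 (r : nat) (hr : 0 < r) :
  exists c : nat, forall (T : finType) (e : rel T),
    simple_graph e -> connected_graph e ->
    ~ contains_subgraph (spider 1 1 1 r) e ->
    ~ subcubic e ->
    treedepth_le e c.
Proof.
exists (8 * r + 1) => T e [esym eirr] conn nosp nsub.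
have [v0 hv0] : exists v0, 3 < #|[set u | e v0 u]|.
  apply: NNPP => hn; apply: nsub => v; rewrite leqNgt; apply/negP => h.
  by apply: hn; exists v.
have [p [g1 g2 [d g3] g4 g5]] : exists p, good e [set: T] None p.
  apply: (forest esym (leqnn _)) => w _; exists w; split => //; exact: connect0.
exists p; split.
  move=> v; case h: (pit p (8 * r + 1) v) => [u|] //; exfalso.
  have he : forall v u, p v = Some u -> e v u by move=> v' u' h'; exact: (g2 _ _ h').1.
  have [s [ps us ss _ _]] := chain he g3 h.
  have [t [pt ut st]] := from_v v0 esym conn (P := v :: s) ps us isT.
  apply: nosp; apply: (longleg esym eirr hr hv0 (leqnn (size t)) pt ut).
  move: st; rewrite /= ss; nia.
move=> a b eab; exact: g4 (in_setT a) (in_setT b) eab.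
Qed.
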